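(* Let $n\ge 2$ and $k\ge 1$. There is no deterministic exploration algorithm that, knowing $n$ and $k$, having unlimited memory, but having no information on (any upper bound on) the system period $p$, solves PVG-Exploration of every feasible anonymous homogeneous PV graph with $n$ sites and $k$ carriers. In other words, in anonymous systems, PVG-Exploration is unsolvable without knowledge of an upper bound on the period, even when restricted to homogeneous systems.
   Context: A PV (periodically varying) system consists of a finite set $S$ of $n$ sites and a set $C$ of $k\le n$ carriers. Each carrier $c$ has a distinct identifier and a route $\pi(c)=\langle x_0,\dots,x_{p(c)-1}\rangle$, a finite sequence of sites (repetitions allowed) of length $p(c)\ge 1$ called its period; for any integer $j$, $\pi(c)[j]$ denotes $x_{j \bmod p(c)}$. At each time $t\in\mathbb{N}$ carrier $c$ is at site $\pi(c)[t]$ and moves to $\pi(c)[t+1]$ (it activates the edge $(\pi(c)[t],\pi(c)[t+1])$ at time $t$). The PV graph $\vec G_R$ (for $R=\{\pi(c):c\in C\}$) is the directed edge-labelled multigraph on $S$ with edges $(x_i,x_{i+1},i)$, $0\le i<p(c)$ (indices mod $p(c)$), for every carrier $c$. Let $p=\max_{c}p(c)$. The system/graph is homogeneous if all carriers have the same period and heterogeneous otherwise. Sites are either anonymous (indistinguishable to the agent) or have distinct identifiers. An exploring agent is injected at time $0$ at a site of $\mathrm{start}(\vec G_R)=\{\pi(c)[0]:c\in C\}$. If at time $t$ the agent is at site $x$, it must either choose a carrier $c$ with $\pi(c)[t]=x$ and ride with it to $\pi(c)[t+1]$ (one move, arriving at time $t+1$), or halt and exit the system; it cannot wait at a site. At each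 time the agent observes the identifiers of the carriers present at its current site (and, in systems with ids, the identifier of the site). An exploration algorithm is a deterministic rule mapping the agent's a priori knowledge and history of observations to its next action; its execution from injection site $x$ determines a walk $\xi(x)$. A walk is a concrete cover if it visits every site of $S$. An algorithm solves PVG-Exploration of $\vec G_R$ if for every injection site $x\in\mathrm{start}(\vec G_R)$ the walk $\xi(x)$ is finite (the agent halts) and is a concrete cover. $\vec G_R$ is feasible if from the starting point of every carrier there exists a walk realizable by the agent (riding carriers and switching between carriers that are at the same site at the same time) that is a concrete cover. *)

(* Defs.v *)
From mathcomp Require Import all_boot.
Set Implicit Arguments. Unset Strict Implicit. Unset Printing Implicit Defensive.

(* A PV system with sites 'I_n and carriers 'I_k.  The route of carrier c is
   the nonempty sequence  (R c).1 :: (R c).2  of sites; its period is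
   p(c) = (size (R c).2).+1 >= 1. *)
Definition routes (n k : nat) := 'I_k -> 'I_n * seq 'I_n.

Definition route n k (R : routes n k) (c : 'I_k) : seq 'I_n := (R c).1 :: (R c).2.
Definition period n k (R : routes n k) (c : 'I_k) : nat := size (route R c).

Definition pos n k (R : routes n k) (c : 'I_k) (t : nat) : 'I_n :=
  nth (R c).1 (route R c) (t %% period R c).

Definition homogeneous n k (R : routes n k) : Prop :=
  exists p, forall c, period R c = p.

Definition start n k (R : routes n k) (x : 'I_n) : Prop := exists c, pos R c 0 = x.

(* feasibility: from the start of every carrier there is a finite realizable
   walk (riding carriers, switching only between co-located carriers at the
   same time) visiting every site. *)
Definition feasible n k (R : routes n k) : Prop :=
  forall c, exists (T : nat) (w : nat -> 'I_n),
    w 0 = pos R c 0 /\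
    (forall t, t < T -> exists c', pos R c' t = w t /\ pos R c' t.+1 = w t.+1) /\
    (forall s : 'I_n, exists t, t <= T /\ w t = s).

(* Anonymous sites: at time t at site x the agent observes only the set of
   carriers present. *)
Definition obs n k (R : routes n k) (t : nat) (x : 'I_n) : {set 'I_k} :=
  [set c | pos R c t == x].

(* A deterministic exploration algorithm (unlimited memory): it maps the whole
   history of observations (times 0..t) to an action: Some c = ride carrier c,
   None = halt. It may depend on n and k (quantified before it), but not on R. *)
Definition Alg (k : nat) := seq {set 'I_k} -> option 'I_k.

(* Configuration at time t: current site and history of observations at times
   < t.  None = the agent has halted or attempted an illegal move. *)
Fixpoint cfg n k (A : Alg k) (R : routes n k) (x : 'I_n) (t : nat)
  : option ('I_n * seq {set 'I_k}) :=
  match t with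
  | 0 => Some (x, [::])
  | t'.+1 =>
    match cfg A R x t' with
    | None => None
    | Some (y, h) =>
      let h' := rcons h (obs R t' y) in
      match A h' with
      | None => None
      | Some c => if pos R c t' == y then Some (pos R c t'.+1, h') else None
      end
    end
  end.

(* The walk from x is finite (the agent halts at some time T, all moves before
   being legal) and is a concrete cover. *)
Definition solves_from n k (A : Alg k) (R : routes n k) (x : 'I_n) : Prop :=
  exists T y h,
    cfg A R x T = Some (y, h) /\ A (rcons h (obs R T y)) = None /\
    forall s : 'I_n, exists t, t <= T /\ exists h', cfg A R x t = Some (s, h').

Definition solves n k (A : Alg k) (R : routes n k) : Prop :=
  forall x, start R x -> solves_from A R x.

(* Main.v *)
Require Import Defs.
From mathcomp Require Import all_boot.
Set Implicit Arguments. Unset Strict Implicit.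

Definition RP m k P : routes m.+2 k :=
  fun _ => (ord0, nseq P (ord0 : 'I_m.+2) ++ map inord (iota 1 m.+1)).

Arguments RP : clear implicits.

Lemma rcons_nseqS (T : Type) (x : T) t : rcons (nseq t x) x = nseq t.+1 x.
Proof. by elim: t => //= t ->. Qed.

Lemma obsT m k P t (c0 : 'I_k) :
  obs (RP m k P) t (pos (RP m k P) c0 t) = setT.
Proof. by apply/setP=> c; rewrite !inE; apply/eqP. Qed.

Lemma cfgP m k (A : Alg k) P (c0 : 'I_k) t y h :
  cfg A (RP m k P) ord0 t = Some (y, h) ->
  (forall u, u < t -> A (nseq u.+1 setT) <> None) /\
  y = pos (RP m k P) c0 t /\ h = nseq t setT.
Proof.
elim: t y h => [|t IH] y h /=.
  by case=> <- <-; split=> //; split=> //; rewrite /pos mod0n.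
case E: (cfg A (RP m k P) ord0 t) => [[y' h']|] //.
have [H1 [-> ->]] := IH _ _ E.
rewrite obsT rcons_nseqS.
case EA: (A _) => [c|] //.
case: ifP => // _ [<- <-].
split; last by [].
move=> u; rewrite ltnS leq_eqVlt; case/orP=> [/eqP-> | /H1 //].
by rewrite EA.
Qed.

Lemma pos_small m k P (c0 : 'I_k) t : t <= P -> pos (RP m k P) c0 t = ord0.
Proof.
move=> htP; rewrite /pos /period /route /= modn_small; last first.
  by rewrite size_cat size_nseq ltnS (leq_trans htP) // leq_addr.
case: t htP => [|t] //= htP.
by rewrite nth_cat size_nseq htP nth_nseq htP.
Qed.

Lemma pos_cover m k P (c0 : 'I_k) (s : 'I_m.+2) :
  exists t, t <= P + m.+1 /\ pos (RP m k P) c0 t = s.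
Proof.
case Es: (val s) => [|i].
  exists 0; split=> //; rewrite pos_small //; apply: val_inj; by rewrite Es.
have hi : i < m.+1 by rewrite -ltnS -Es ltn_ord.
exists (P + i).+1; split; first by rewrite -addnS leq_add2l.
have sz : period (RP m k P) c0 = (P + m.+1).+1.
  rewrite /period /route.
  change ((size (nseq P (ord0 : 'I_m.+2) ++ map inord (iota 1 m.+1))).+1 = (P + m.+1).+1).
  by rewrite size_cat size_nseq size_map size_iota.
rewrite /pos sz modn_small; last by rewrite ltnS ltn_add2l.
change (nth ord0 (nseq P (ord0 : 'I_m.+2) ++ map inord (iota 1 m.+1)) (P + i) = s).
rewrite nth_cat size_nseq (_ : P + i < P = false) ?addKn; last by rewrite ltnNge leq_addr.
rewrite (nth_map 0); last by rewrite size_iota.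
rewrite nth_iota //; apply: val_inj; rewrite /= inordK; first by rewrite Es.
by rewrite add1n -Es ltn_ord.
Qed.

Lemma hom m k P : homogeneous (RP m k P).
Proof. by exists (size (ord0 :: nseq P (ord0 : 'I_m.+2) ++ map inord (iota 1 m.+1))). Qed.

Lemma feas m k P (c0 : 'I_k) : feasible (RP m k P).
Proof.
move=> c; exists (P + m.+1), (pos (RP m k P) c0); split=> //; split.
  by move=> t _; exists c0.
move=> s; have [t [ht hs]] := pos_cover P c0 s; by exists t.
Qed.

Theorem mainTheorem1 (n k : nat) (hn : 2 <= n) (hk : 1 <= k) (hkn : k <= n) :
  ~ exists A : Alg k,
      forall R : routes n k, homogeneous R -> feasible R -> solves A R.
Proof.
case: n hn hkn => [|[|m]] // _ _ [A HA].
pose c0 : 'I_k := Ordinal hk.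
have st P : start (RP m k P) ord0 by exists c0; rewrite pos_small.
have [T1 [y1 [h1 [E1 [N1 _]]]]] := HA _ (hom m k 0) (@feas m k 0 c0) _ (st 0).
have [F1 [Y1 H1]] := cfgP c0 E1.
rewrite Y1 H1 obsT rcons_nseqS in N1.
have [T2 [y2 [h2 [E2 [N2 C2]]]]] :=
  HA _ (hom m k T1.+1) (@feas m k T1.+1 c0) _ (st T1.+1).
have [F2 [Y2 H2]] := cfgP c0 E2.
rewrite Y2 H2 obsT rcons_nseqS in N2.
have eT : T2 = T1.
  case: (ltngtP T2 T1) => // hlt.
    by case: (F1 _ hlt).
  by case: (F2 _ hlt).
have [t [ht [h' Et]]] := C2 (inord 1).
have [_ [Yt _]] := cfgP c0 Et.
rewrite pos_small in Yt; last by rewrite (leq_trans ht) // eT.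
have : val (inord 1 : 'I_m.+2) = 0 by rewrite Yt.
by rewrite /= inordK.
Qed.
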